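(* Let $\mathcal F'$ be a finite set of structures in $Rel^{cov}(\Delta,\Delta')$. Suppose there exists a finite set of structures $\mathcal D'$ such that $(\mathcal F',\mathcal D')$ is a finite duality in $Rel^{cov}(\Delta,\Delta')$. Then $\Phi(\mathrm{Forb}(\mathcal F'))=\{\Phi(\mathbf A'):\mathbf A'\in\mathrm{Forb}(\mathcal F')\}$ coincides with $CSP(\Phi(\mathcal D'))=\bigcup_{\mathbf D'\in\mathcal D'}CSP(\Phi(\mathbf D'))$. Explicitly: for every $\mathbf A\in Rel(\Delta)$ there exists $\mathbf A'\in Rel(\Delta,\Delta')$ with $\Phi(\mathbf A')=\mathbf A$ and $\mathbf F'\not\to\mathbf A'$ for every $\mathbf F'\in\mathcal F'$ if and only if $\mathbf A\to\Phi(\mathbf D')$ for some $\mathbf D'\in\mathcal D'$.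
   Context: For a finite relational signature $\Delta$, $Rel(\Delta)$ is the class of finite relational structures of signature $\Delta$ with homomorphisms (maps preserving all relations); $\mathbf A\to\mathbf B$ means there is a homomorphism. For disjoint signatures $\Delta,\Delta'$, $Rel(\Delta,\Delta')=Rel(\Delta\cup\Delta')$, and $\Phi:Rel(\Delta,\Delta')\to Rel(\Delta)$ is the forgetful functor deleting the relations of $\Delta'$ (identity on maps). $Rel^{cov}(\Delta,\Delta')$ is the class of structures in $Rel(\Delta,\Delta')$ where all relations in $\Delta'$ have a common arity $r$ and every $r$-tuple of elements belongs to some relation of $\Delta'$, with homomorphisms as morphisms. For a finite set $\mathcal F'$ in a category $\mathcal C$ of structures, $\mathrm{Forb}(\mathcal F')$ is the class of $\mathbf A'\in\mathcal C$ with $\mathbf F'\not\to\mathbf A'$ for all $\mathbf F'\in\mathcal F'$; for a finite set $\mathcal D'$, $CSP(\mathcal D')$ is the class of $\mathbf A'\in\mathcal C$ with $\mathbf A'\to\mathbf D'$ for some $\mathbf D'\in\mathcal D'$. The pair $(\mathcal F',\mathcal D')$ is a finite duality in $\mathcal C$ if $\mathrm{Forb}(\mathcal F')=CSP(\mathcal D')$ in $\mathcal C$. $\Phi(\mathcal D')=\{\Phi(\mathbf D'):\mathbf D'\in\mathcal D'\}$, and $CSP(\Phi(\mathcal D'))$ is taken in $Rel(\Delta)$. *)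

(* Defs.v *)
From mathcomp Require Import all_boot.
Set Implicit Arguments. Unset Strict Implicit. Unset Printing Implicit Defensive.

(* A finite relational signature Delta is a finite index type [I] of relation
   symbols together with an arity function [ar : I -> nat]. *)
Record structure (I : finType) (ar : I -> nat) := Structure {
  carrier : finType;
  rel : forall i : I, {set (ar i).-tuple carrier}
}.

Definition hom (I : finType) (ar : I -> nat) (A B : structure ar) : Prop :=
  exists f : carrier A -> carrier B,
    forall (i : I) (t : (ar i).-tuple (carrier A)),
      t \in rel A i -> map_tuple f t \in rel B i.

(* Structures of Rel(Delta, Delta') where Delta = (I, ar) and Delta' = J is a
   finite set of symbols all of the common arity r. *)
Record structure2 (I : finType) (ar : I -> nat) (J : finType) (r : nat) :=
  Structure2 {
  base : structure ar;
  rel' : forall j : J, {set r.-tuple (carrier base)}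
}.

Definition Phi (I : finType) (ar : I -> nat) (J : finType) (r : nat)
  (A : structure2 ar J r) : structure ar := base A.

Definition hom2 (I : finType) (ar : I -> nat) (J : finType) (r : nat)
  (A B : structure2 ar J r) : Prop :=
  exists f : carrier (base A) -> carrier (base B),
    (forall (i : I) (t : (ar i).-tuple (carrier (base A))),
      t \in rel (base A) i -> map_tuple f t \in rel (base B) i) /\
    (forall (j : J) (t : r.-tuple (carrier (base A))),
      t \in rel' A j -> map_tuple f t \in rel' B j).

Definition covering (I : finType) (ar : I -> nat) (J : finType) (r : nat)
  (A : structure2 ar J r) : Prop :=
  forall t : r.-tuple (carrier (base A)), exists j : J, t \in rel' A j.

(* (F', D') is a finite duality in Rel^cov(Delta, Delta'); the finite sets
   F', D' are given as families indexed by finite types KF, KD. *)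
Definition finite_duality_cov (I : finType) (ar : I -> nat) (J : finType)
  (r : nat) (KF KD : finType) (F : KF -> structure2 ar J r)
  (D : KD -> structure2 ar J r) : Prop :=
  forall A' : structure2 ar J r, covering A' ->
    ((forall k : KF, ~ hom2 (F k) A') <-> exists d : KD, hom2 A' (D d)).

(* Main.v *)
Require Import Defs.
From mathcomp Require Import all_boot.

Theorem theorem10 (I : finType) (ar : I -> nat) (J : finType) (r : nat)
  (KF KD : finType) (F : KF -> structure2 ar J r) (D : KD -> structure2 ar J r)
  (HFcov : forall k : KF, covering (F k))
  (HDcov : forall d : KD, covering (D d))
  (Hdual : finite_duality_cov F D) :
  forall A : structure ar,
    (exists A' : structure2 ar J r,
        Phi A' = A /\ covering A' /\ (forall k : KF, ~ hom2 (F k) A'))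
    <-> (exists d : KD, hom A (Phi (D d))).
Proof.
move=> A; split.
- move=> [A' [<- [Hc Hn]]].
  have [d [f [Hf _]]] := (proj1 (Hdual A' Hc)) Hn.
  by exists d, f.
- move=> [d [f Hf]].
  pose A' := @Structure2 I ar J r A
    (fun j => [set t : r.-tuple (carrier A) | map_tuple f t \in rel' (D d) j]).
  have Hc : covering A'.
    move=> t; have [j Hj] := HDcov d (map_tuple f t).
    by exists j; rewrite inE.
  exists A'; split; first by [].
  split; first exact: Hc.
  apply: (proj2 (Hdual A' Hc)).
  exists d, f; split; first exact: Hf.
  by move=> j t; rewrite inE.
Qed.
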